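(* Let $\mathcal{G}$ be an effective ample groupoid. The following are equivalent: (1) $(\llbracket\mathcal{G}\rrbracket,\mathcal{G}^{(0)})$ is locally moving, i.e.\ for every non-empty open $A\subseteq\mathcal{G}^{(0)}$ there is $\gamma\in\llbracket\mathcal{G}\rrbracket\setminus\{1\}$ with $\operatorname{supp}(\gamma)\subseteq A$; (2) every non-empty clopen subset of $\mathcal{G}^{(0)}$ contains two distinct points of some single $\mathcal{G}$-orbit.
   Context: Étale groupoid: topological groupoid whose range map $r(g)=gg^{-1}$ is a local homeomorphism, source $s(g)=g^{-1}g$; ample: étale with $\mathcal{G}^{(0)}$ Hausdorff having a basis of compact open sets; effective: interior of $\{g:s(g)=r(g)\}$ equals $\mathcal{G}^{(0)}$. $\mathcal{G}$-orbit of $x$: $\{r(g):s(g)=x\}$. A full bisection is an open $U$ with $s,r$ injective on $U$ and $s(U)=r(U)=\mathcal{G}^{(0)}$; $\pi_U=r|_U\circ(s|_U)^{-1}$. $\operatorname{supp}(\phi)$ is the closure of the set of points moved by $\phi$. $\llbracket\mathcal{G}\rrbracket$ is the group of all $\pi_U$ for full bisections $U$ with $\operatorname{supp}(\pi_U)$ compact. *)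

(* Defs.v *)
From HB Require Import structures.
From mathcomp Require Import all_boot all_order.
From mathcomp Require Import all_classical all_reals all_analysis.
Set Implicit Arguments. Unset Strict Implicit. Unset Printing Implicit Defensive.
Local Open Scope classical_set_scope.

Definition rel_open {T : topologicalType} (U A : set T) : Prop :=
  exists O : set T, open O /\ A = O `&` U.
Definition rel_closure {T : topologicalType} (U A : set T) : set T :=
  closure A `&` U.
Definition rel_clopen {T : topologicalType} (U A : set T) : Prop :=
  A `<=` U /\ rel_open U A /\ rel_open U (U `\` A).

(* A topological groupoid on the space T.  Multiplication is given as a total
   function but is only constrained on composable pairs (s g = r h). *)
Record top_groupoid (T : topologicalType) := TopGroupoid {
  units : set T;
  src : T -> T;
  rng : T -> T;
  mul : T -> T -> T;
  inv : T -> T;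
  src_units : forall g, units (src g);
  rng_units : forall g, units (rng g);
  src_unit : forall u, units u -> src u = u;
  rng_unit : forall u, units u -> rng u = u;
  src_mul : forall g h, src g = rng h -> src (mul g h) = src h;
  rng_mul : forall g h, src g = rng h -> rng (mul g h) = rng g;
  mulA : forall g h k, src g = rng h -> src h = rng k ->
    mul (mul g h) k = mul g (mul h k);
  mul_rng : forall g, mul (rng g) g = g;
  mul_src : forall g, mul g (src g) = g;
  src_inv : forall g, src (inv g) = rng g;
  rng_inv : forall g, rng (inv g) = src g;
  mulV : forall g, mul g (inv g) = rng g;
  mulVg : forall g, mul (inv g) g = src g;
  mul_cont : {within [set p : T * T | src p.1 = rng p.2],
               continuous (fun p : T * T => mul p.1 p.2)};
  inv_cont : continuous inv
}.

Section GroupoidDefs.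
Context {T : topologicalType} (G : top_groupoid T).

(* r : G -> G^(0) is a local homeomorphism. *)
Definition etale : Prop :=
  forall g, exists V : set T, [/\ open V, V g, {in V &, injective (rng G)},
    {within V, continuous (rng G)} &
    forall W, open W -> W `<=` V -> rel_open (units G) (rng G @` W)].

Definition units_hausdorff : Prop :=
  forall x y, units G x -> units G y -> x <> y ->
    exists A B : set T, [/\ open A, open B, A x, B y &
      A `&` B `&` units G = set0].

Definition units_compact_open_basis : Prop :=
  forall (x : T) (W : set T), units G x -> open W -> W x ->
    exists K : set T, [/\ K `<=` units G, rel_open (units G) K, compact K,
      K x & K `<=` W].

Definition ample : Prop :=
  [/\ etale, units_hausdorff & units_compact_open_basis].

Definition effective : Prop :=
  interior [set g | src G g = rng G g] = units G.

Definition full_bisection (V : set T) : Prop :=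
  [/\ open V, {in V &, injective (src G)}, {in V &, injective (rng G)},
    src G @` V = units G & rng G @` V = units G].

(* For a full bisection V, pi_V = r|_V o (s|_V)^-1; the set of points it
   moves is {x | pi_V x <> x} = {s g | g in V, r g <> s g}. *)
Definition moved (V : set T) : set T :=
  [set x | exists g, [/\ V g, src G g = x & rng G g <> x]].

Definition supp (V : set T) : set T := rel_closure (units G) (moved V).

(* pi_V belongs to the topological full group [[G]]. *)
Definition in_full_group (V : set T) : Prop :=
  full_bisection V /\ compact (supp V).

Definition locally_moving : Prop :=
  forall A : set T, A `<=` units G -> rel_open (units G) A -> A !=set0 ->
    exists V : set T, [/\ in_full_group V, moved V !=set0 & supp V `<=` A].

Definition same_orbit (x y : T) : Prop :=
  exists g, src G g = x /\ rng G g = y.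

Definition clopen_orbit_condition : Prop :=
  forall C : set T, rel_clopen (units G) C -> C !=set0 ->
    exists x y, [/\ C x, C y, x <> y & same_orbit x y].

End GroupoidDefs.

(* Main.v *)
From Pilot Require Import Defs.
From mathcomp Require Import all_boot all_order.
From mathcomp Require Import all_classical all_reals all_analysis.
Set Implicit Arguments. Unset Strict Implicit. Unset Printing Implicit Defensive.
Local Open Scope classical_set_scope.
Local Notation inv := Pilot.Defs.inv.
Local Notation src := Pilot.Defs.src.
Local Notation rng := Pilot.Defs.rng.
Local Notation mul := Pilot.Defs.mul.
Local Notation units := Pilot.Defs.units.
Local Notation mulA := Pilot.Defs.mulA.
Local Notation mulVg := Pilot.Defs.mulVg.
Local Notation mulV := Pilot.Defs.mulV.
Local Notation src_inv := Pilot.Defs.src_inv.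
Local Notation rng_inv := Pilot.Defs.rng_inv.
Local Notation mul_src := Pilot.Defs.mul_src.
Local Notation mul_rng := Pilot.Defs.mul_rng.
Local Notation inv_cont := Pilot.Defs.inv_cont.

Lemma invK (T : topologicalType) (G : top_groupoid T) g :
  inv G (inv G g) = g.
Proof.
set h := inv G (inv G g).
have sh : src G h = src G g by rewrite /h src_inv rng_inv.
rewrite -[LHS](mul_src G) sh -(mulVg G g) -mulA; last first.
- by rewrite src_inv.
- by rewrite /h src_inv.
by rewrite /h mulVg src_inv mul_rng.
Qed.

Lemma units_open (T : topologicalType) (G : top_groupoid T) :
  effective G -> open (units G).
Proof. by move=> <-; exact: open_interior. Qed.

Lemma rel_open_open (T : topologicalType) (G : top_groupoid T) X :
  open (units G) -> rel_open (units G) X -> open X.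
Proof. move=> hU [W0 [hO ->]]; exact: openI. Qed.

Lemma rng_cont (T : topologicalType) (G : top_groupoid T) :
  etale G -> continuous (rng G).
Proof.
move=> et g; have [V [oV Vg _ cV _]] := et g.
by move: cV; rewrite continuous_open_subspace // => /(_ g (mem_set Vg)).
Qed.

Lemma src_cont (T : topologicalType) (G : top_groupoid T) :
  etale G -> continuous (src G).
Proof.
move=> et; have -> : src G = rng G \o inv G.
  by apply: funext => g /=; rewrite rng_inv.
move=> g; apply: continuous_comp; first exact: inv_cont.
exact: rng_cont.
Qed.

Lemma preim_open (T : topologicalType) (f : T -> T) (D : set T) :
  continuous f -> open D -> open (f @^-1` D).
Proof. by move=> /continuousP; apply. Qed.

Lemma src_image_open (T : topologicalType) (G : top_groupoid T) V X :
  (forall W, open W -> W `<=` V -> rel_open (units G) (rng G @` W)) ->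
  open X -> X `<=` [set h | V (inv G h)] -> rel_open (units G) (src G @` X).
Proof.
move=> HV oX XV.
have -> : src G @` X = rng G @` (inv G @^-1` X).
  apply/seteqP; split => z.
  - case=> h Xh <-; exists (inv G h); last by rewrite rng_inv.
    by change (X (inv G (inv G h))); rewrite invK.
  - by case=> h Xh <-; exists (inv G h) => //; rewrite src_inv.
apply: HV; first exact: preim_open (@inv_cont _ G) oX.
by move=> h /XV /=; rewrite invK.
Qed.

Lemma closure_compact_units (T : topologicalType) (G : top_groupoid T) K :
  units_hausdorff G -> compact K -> K `<=` units G ->
  closure K `&` units G `<=` K.
Proof.
move=> Hh cK KU z [clz Uz]; apply: contrapT => Kz.
have PF : ProperFilter (within K (nbhs z)) by apply: within_nbhs_proper.
have [c [Kc clc]] := cK _ PF (withinT _ (@nbhs_filter _ z)).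
have zc : z <> c by move=> zc; apply: Kz; rewrite zc.
have [A [B [oA oB Az Bc AB0]]] := Hh z c Uz (KU c Kc) zc.
have FA : within K (nbhs z) (A `&` K).
  by apply: filterS (open_nbhs_nbhs (conj oA Az)) => t At Kt.
have [t [[At Kt] Bt]] := clc _ _ FA (open_nbhs_nbhs (conj oB Bc)).
have : (A `&` B `&` units G) t by split; [split|exact: KU].
by rewrite AB0.
Qed.

Lemma open_units_diff (T : topologicalType) (G : top_groupoid T) K :
  open (units G) -> units_hausdorff G -> compact K -> K `<=` units G ->
  open (units G `\` K).
Proof.
move=> oU Hh cK KU; rewrite openE => z [Uz nKz].
apply: contrapT => H; apply: nKz; apply: (closure_compact_units Hh cK KU).
split=> // B nB; apply: contrapT => nKB; apply: H.
apply: filterS (filterI nB (open_nbhs_nbhs (conj oU Uz))) => t [Bt Ut].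
by split => // Kt; apply: nKB; exists t.
Qed.

Lemma lm_coc (T : topologicalType) (G : top_groupoid T) :
  locally_moving G -> clopen_orbit_condition G.
Proof.
move=> LM C [CU [oC _]] [c Cc].
have [V [[[oV sinj rinj sV rV] _] [x [g [Vg sgx rgx]]] suppC]] :=
  LM C CU oC (ex_intro _ c Cc).
have Cx : C x.
  apply: suppC; split; first by apply: subset_closure; exists g.
  by rewrite -sgx; exact: src_units.
have : (src G @` V) (rng G g) by rewrite sV; exact: rng_units.
case=> h Vh shg.
have Cy : C (rng G g).
  apply: suppC; split; last exact: rng_units.
  apply: subset_closure; exists h; split => //.
  move=> rh; apply: rgx; rewrite -sgx.
  have hg : h = g.
    apply: rinj; [exact: mem_set| exact: mem_set| exact: rh].
  by rewrite -shg hg.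
exists x, (rng G g); split => //; first by move=> /esym.
by exists g.
Qed.

Lemma coc_lm (T : topologicalType) (G : top_groupoid T) :
  ample G -> effective G -> clopen_orbit_condition G -> locally_moving G.
Proof.
move=> [et Hh Hb] eff COC A AU [B0 [oO1 AE]] [a Aa].
have oU := units_open eff.
have sc := src_cont et; have rc := rng_cont et.
have Ua : units G a := AU a Aa.
have O1a : B0 a by move: Aa; rewrite AE => -[].
have [K [KU roK cK Ka KO]] := Hb a B0 Ua oO1 O1a.
have oK : open K := rel_open_open oU roK.
have clK : rel_clopen (units G) K.
  split=> //; split=> //; exists (units G `\` K); split.
    exact: open_units_diff.
  by rewrite setIidl // => t [].
have [x [y [Kx Ky xy [g [sgx rgy]]]]] := COC K clK (ex_intro _ a Ka).
have [V1 [oV1 V1g rinj1 _ rop1]] := et g.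
have [V2 [oV2 V2g rinj2 _ rop2]] := et (inv G g).
have [P [Q [oP oQ Px Qy PQ]]] := Hh x y (KU x Kx) (KU y Ky) xy.
pose U' := V1 `&` inv G @^-1` V2 `&` src G @^-1` (P `&` K)
   `&` rng G @^-1` (Q `&` K).
have oU' : open U'.
  apply: openI; last by apply: preim_open => //; exact: openI.
  apply: openI; last by apply: preim_open => //; exact: openI.
  by apply: openI => //; apply: preim_open => //; exact: inv_cont.
have U'g : U' g by rewrite /U'; repeat split => //; rewrite ?sgx ?rgy.
have sinjU : {in U' &, injective (src G)}.
  move=> h1 h2 /set_mem [[[_ h1V2] _] _] /set_mem [[[_ h2V2] _] _] e.
  rewrite -(invK G h1) -(invK G h2); congr (inv G _).
  by apply: rinj2; [exact: mem_set|exact: mem_set|rewrite !rng_inv].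
have rinjU : {in U' &, injective (rng G)}.
  move=> h1 h2 /set_mem [[[h1V1 _] _] _] /set_mem [[[h2V1 _] _] _] e.
  by apply: rinj1; [exact: mem_set|exact: mem_set|].
have U'V2 : U' `<=` [set h | V2 (inv G h)] by move=> h [[[_ ?] _] _].
have oSU : open (src G @` U').
  exact: rel_open_open oU (src_image_open rop2 oU' U'V2).
have [K1 [K1U roK1 cK1 K1x K1S]] :=
  Hb x (src G @` U') (KU x Kx) oSU (ex_intro2 _ _ g U'g sgx).
have oK1 := rel_open_open oU roK1.
pose W := U' `&` src G @^-1` K1.
have oW : open W by apply: openI => //; exact: preim_open.
have Wg : W g by split => //; rewrite /preimage /= sgx.
have K1sW : K1 `<=` src G @` W.
  move=> k Kk; have [h Uh shk] := K1S k Kk; exists h => //; split => //.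
  by rewrite /preimage /= shk.
pose L := rng G @` W.
have WU' : W `<=` U' by move=> h [].
pose phi k := match pselect (exists h, W h /\ src G h = k) with
  | left e => rng G (projT1 (cid e)) | right _ => k end.
have phiP : forall h, W h -> phi (src G h) = rng G h.
  move=> h Wh; rewrite /phi; case: pselect => [e|[]]; last by exists h.
  case: cid => h' [Wh' sh'] /=; congr (rng G _); apply: sinjU => //.
  - exact/mem_set/WU'.
  - exact/mem_set/WU'.
have LE : L = phi @` K1.
  apply/seteqP; split => z.
  - by case=> h Wh <-; exists (src G h); [exact: Wh.2 | exact: phiP].
  - case=> k Kk <-; have [h Wh <-] := K1sW k Kk; exists h => //.
    by rewrite phiP.
have cL : compact L.
  rewrite LE; apply: continuous_compact => //.
  rewrite continuous_open_subspace // => k /set_mem Kk.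
  have [h Wh <-] := K1sW k Kk.
  move=> B; rewrite phiP // => nB.
  have := rc h B nB; rewrite nbhsE => -[C [oC Ch] CB].
  have oX : open (src G @` (W `&` C)).
    apply: rel_open_open oU (src_image_open rop2 (openI oW oC) _).
    by move=> t [Wt _]; exact/U'V2/WU'.
  change (nbhs (src G h) (phi @^-1` B)).
  apply: filterS (open_nbhs_nbhs (conj oX (ex_intro2 _ _ h (conj Wh Ch) erefl))).
  by move=> t [h' [Wh' Ch'] <-]; rewrite /preimage /= phiP //; exact: CB.
have LU : L `<=` units G by move=> t [h _ <-]; exact: rng_units.
have WK1 : forall h, W h -> K1 (src G h) by move=> h [].
have WL : forall h, W h -> L (rng G h) by move=> h Wh; exists h.
have WK : forall h, W h -> K (src G h) /\ K (rng G h).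
  by move=> h [[[_ [_ ?]] [_ ?]] _].
have KL0 : forall t, K1 t -> L t -> False.
  move=> t K1t [h' Wh' ht].
  have [h'' [[_ [Ph'' _]] _] sh''] := K1S t K1t.
  have : (P `&` Q `&` units G) t.
    split; [split|exact: K1U].
    - by rewrite -sh''.
    - by rewrite -ht; case: (WU' h' Wh') => _ [].
  by rewrite PQ.
pose R := units G `\` (K1 `|` L).
have oR : open R.
  apply: open_units_diff => //; first exact: compactU.
  by move=> t [/K1U|/LU].
pose V := W `|` inv G @^-1` W `|` R.
have oV : open V.
  apply: openU => //; apply: openU => //; apply: preim_open => //.
  exact: inv_cont.
have Rsrc : forall h, R h -> src G h = h by move=> h [Uh _]; exact: src_unit.
have Rrng : forall h, R h -> rng G h = h by move=> h [Uh _]; exact: rng_unit.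
have invW : forall h, W (inv G h) -> L (src G h) /\ K1 (rng G h).
  move=> h Wh; split; first by rewrite -rng_inv; exact: WL.
  by rewrite -src_inv; exact: WK1.
have invinj : forall h1 h2, inv G h1 = inv G h2 -> h1 = h2.
  by move=> h1 h2 e; rewrite -(invK G h1) e invK.
have sinjV : {in V &, injective (src G)}.
  move=> h1 h2 /set_mem [[W1|I1]|R1] /set_mem [[W2|I2]|R2] e.
  - by apply: sinjU => //; exact/mem_set/WU'.
  - by exfalso; apply: (KL0 (src G h1)); [exact: WK1|rewrite e; exact: (invW _ I2).1].
  - by exfalso; case: (R2) => _; apply; left; rewrite -(Rsrc _ R2) -e; exact: WK1.
  - by exfalso; apply: (KL0 (src G h2)); [exact: WK1|rewrite -e; exact: (invW _ I1).1].
  - apply: invinj; apply: rinjU; try exact/mem_set/WU'.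
    by rewrite !rng_inv.
  - by exfalso; case: (R2) => _; apply; right; rewrite -(Rsrc _ R2) -e; exact: (invW _ I1).1.
  - by exfalso; case: (R1) => _; apply; left; rewrite -(Rsrc _ R1) e; exact: WK1.
  - by exfalso; case: (R1) => _; apply; right; rewrite -(Rsrc _ R1) e; exact: (invW _ I2).1.
  - by rewrite -(Rsrc _ R1) -(Rsrc _ R2).
have rinjV : {in V &, injective (rng G)}.
  move=> h1 h2 /set_mem [[W1|I1]|R1] /set_mem [[W2|I2]|R2] e.
  - by apply: rinjU => //; exact/mem_set/WU'.
  - by exfalso; apply: (KL0 (rng G h2)); [exact: (invW _ I2).2|rewrite -e; exact: WL].
  - by exfalso; case: (R2) => _; apply; right; rewrite -(Rrng _ R2) -e; exact: WL.
  - by exfalso; apply: (KL0 (rng G h1)); [exact: (invW _ I1).2|rewrite e; exact: WL].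
  - apply: invinj; apply: sinjU; try exact/mem_set/WU'.
    by rewrite !src_inv.
  - by exfalso; case: (R2) => _; apply; left; rewrite -(Rrng _ R2) -e; exact: (invW _ I1).2.
  - by exfalso; case: (R1) => _; apply; right; rewrite -(Rrng _ R1) e; exact: WL.
  - by exfalso; case: (R1) => _; apply; left; rewrite -(Rrng _ R1) e; exact: (invW _ I2).2.
  - by rewrite -(Rrng _ R1) -(Rrng _ R2).
have VinvW : forall h, W h -> V (inv G h).
  by move=> h Wh; left; right; rewrite /preimage /= invK.
have sV : src G @` V = units G.
  apply/seteqP; split; first by move=> _ [h _ <-]; exact: src_units.
  move=> u Uu; case: (pselect (K1 u)) => [Ku|nK].
    by have [h Wh <-] := K1sW u Ku; exists h => //; left; left.
  case: (pselect (L u)) => [[h Wh <-]|nL].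
    by exists (inv G h); [exact: VinvW|rewrite src_inv].
  exists u; last exact: src_unit.
  by right; split => // -[].
have rV : rng G @` V = units G.
  apply/seteqP; split; first by move=> _ [h _ <-]; exact: rng_units.
  move=> u Uu; case: (pselect (K1 u)) => [Ku|nK].
    by have [h Wh <-] := K1sW u Ku; exists (inv G h); [exact: VinvW|rewrite rng_inv].
  case: (pselect (L u)) => [[h Wh <-]|nL].
    by exists h => //; left; left.
  exists u; last exact: rng_unit.
  by right; split => // -[].
have movedK : moved G V `<=` K.
  move=> t [h [[[Wh|Ih]|Rh] <- nh]].
  - exact: (WK h Wh).1.
  - by rewrite -rng_inv; exact: (WK _ Ih).2.
  - by exfalso; apply: nh; rewrite Rrng // Rsrc.
have suppK : supp G V `<=` K.
  move=> t [ct Ut]; apply: (closure_compact_units Hh cK KU); split => //.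
  exact: closureS movedK _ ct.
exists V; split.
- split; first by split.
  have -> : supp G V = K `&` closure (moved G V).
    apply/seteqP; split => t.
    + by move=> Ht; split; [exact: suppK|case: Ht].
    + by move=> [Kt ct]; split => //; exact: KU.
  apply: compact_closedI => //; exact: closed_closure.
- exists x, g; split => //; first by left; left.
  by rewrite rgy => /esym.
- by move=> t /suppK Kt; rewrite AE; split; [exact: KO|exact: KU].
Qed.

Theorem proposition7p7 (T : topologicalType) (G : top_groupoid T) :
  ample G -> effective G ->
  (locally_moving G <-> clopen_orbit_condition G).
Proof.
move=> am eff; split; first exact: lm_coc.
exact: coc_lm.
Qed.
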